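(* Let $S$ be a state space and, for each temperature $T>0$, let $p_T(\cdot\mid\cdot)$ be a Markov transition kernel on $S$. Let $q_0$ be a probability distribution on $S$ (the data distribution) and $p^*$ a probability distribution on $S$ (the starting prior of generation). Fix integers $L\ge 1$ and $N_1>1$. For each $n\in\{0,1,\dots,N_1\}$ put $K_n=L+n$ and let $T^{(n)}_1,\dots,T^{(n)}_{K_n}$ be a temperature schedule with $T^{(n)}_t=1$ for $1\le t\le n+1$ (and $T^{(n)}_t\ge 1$ non-decreasing in $t$). Define the destructive (heating) process $$q^{(n)}(s_0,\dots,s_{K_n})=q_0(s_0)\prod_{t=1}^{K_n}p_{T^{(n)}_t}(s_t\mid s_{t-1})$$ and the generative (cooling) process $$p^{(n)}(s_0,\dots,s_{K_n})=p^*(s_{K_n})\prod_{t=1}^{K_n}p_{T^{(n)}_t}(s_{t-1}\mid s_t).$$ Suppose that (the model $p$ having enough capacity, training data and training time, with slow enough annealing and small enough departure from reversibility) at convergence of training $p$ matches $q$, i.e. $p^{(n)}=q^{(n)}$ as joint distributions on $S^{K_n+1}$ for every $n\in\{0,\dots,N_1\}$. Then $q_0$ is a stationary distribution of the temperature-1 transition operator $p_1$, i.e. $\int p_1(s\mid s')\,q_0(ds')=q_0(s)$.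
   Context: This is the convergence result for Variational Walkback (VW) training. In VW the same parameterized transition operator $p_T$ is used both for the forward destructive (heating) chain started at a data point and, read backwards in time, for the generative (cooling) chain started from $p^*$; a trajectory of length $K=L+n$ uses $n+1$ initial steps at temperature $1$ in the heating direction (equivalently, the last $n+1$ generative steps are at temperature $1$), with $n$ ranging over $\{0,\dots,N_1\}$. ''$p$ matches $q$'' is taken to mean equality of these joint trajectory distributions. The temperature-1 operator $p_1$ is the model used for sampling. *)

(* Defs.v *)
From HB Require Import structures.
From mathcomp Require Import all_boot all_order all_algebra.
From mathcomp Require Import all_classical all_reals all_analysis.
Set Implicit Arguments. Unset Strict Implicit. Unset Printing Implicit Defensive.
Import Order.TTheory GRing.Theory Num.Theory.
Local Open Scope classical_set_scope.
Local Open Scope ring_scope.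

(* Temperature schedule for a trajectory with n extra temperature-1 steps:
   base schedule tau_1 = 1, tau_2, ..., tau_L; the n-th schedule is
   T^(n)_t = 1 for 1 <= t <= n and T^(n)_t = tau_(t-n) for n < t <= L+n. *)
Definition sched (R : realType) (tau : nat -> R) (n t : nat) : R :=
  if (t <= n)%N then 1 else tau (t - n)%N.

Section Trajectories.
Context (R : realType) (d : measure_display) (S : measurableType d).
Context (pk : R -> R.-pker S ~> S) (T : nat -> R) (A : nat -> set S).
Local Open Scope ereal_scope.

Fixpoint fwd (m t : nat) (s : S) : \bar R :=
  match m with
  | 0 => 1
  | m'.+1 => \int[pk (T t.+1) s]_(y in A t.+1) fwd m' t.+1 y
  end.

Fixpoint bwd (m t : nat) (s : S) : \bar R :=
  match m with
  | 0 => 1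
  | m'.+1 => \int[pk (T t) s]_(y in A t.-1) bwd m' t.-1 y
  end.

End Trajectories.

Local Open Scope ereal_scope.
(* q(A_0 x ... x A_K) for the destructive process started at q0 *)
Definition heat_rect (R : realType) (d : measure_display) (S : measurableType d)
  (pk : R -> R.-pker S ~> S) (q0 : probability S R) (T : nat -> R)
  (A : nat -> set S) (K : nat) : \bar R :=
  \int[q0]_(s in A 0%N) fwd pk T A K 0 s.

(* p(A_0 x ... x A_K) for the generative process started at pstar at time K *)
Definition cool_rect (R : realType) (d : measure_display) (S : measurableType d)
  (pk : R -> R.-pker S ~> S) (pstar : probability S R) (T : nat -> R)
  (A : nat -> set S) (K : nat) : \bar R :=
  \int[pstar]_(s in A K) bwd pk T A K K s.

(* equality of the two joint laws on S^(K+1): they agree on all measurable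
   rectangles (a pi-system generating the product sigma-algebra) *)
Definition joint_match (R : realType) (d : measure_display) (S : measurableType d)
  (pk : R -> R.-pker S ~> S) (q0 pstar : probability S R) (T : nat -> R)
  (K : nat) : Prop :=
  forall A : nat -> set S, (forall t, measurable (A t)) ->
    heat_rect pk q0 T A K = cool_rect pk pstar T A K.

(* Main.v *)
Require Import Defs.
From HB Require Import structures.
From mathcomp Require Import all_boot all_order all_algebra.
From mathcomp Require Import all_classical all_reals all_analysis.
Import Order.TTheory GRing.Theory Num.Theory.
Local Open Scope classical_set_scope.
Local Open Scope ring_scope.

Section Helpers.
Context (R : realType) (d : measure_display) (S : measurableType d).
Context (pk : R -> R.-pker S ~> S).
Local Open Scope ereal_scope.

Lemma int_one (mu : measure S R) (D : set S) : measurable D ->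
  \int[mu]_(y in D) (1 : \bar R) = mu D.
Proof.
move=> mD; have := integral_cst mu mD 1; rewrite mul1e => <-; by [].
Qed.

Lemma fwd_one (T : nat -> R) (A : nat -> set S) m t s :
  (forall u, (t < u)%N -> A u = setT) -> fwd pk T A m t s = 1.
Proof.
elim: m t s => [//|m IH] t s HA /=.
rewrite HA // (eq_integral (fun _ => 1)); last first.
  move=> y _; apply: IH => u Hu; apply: HA; exact: ltn_trans Hu.
by rewrite int_one // prob_kernel.
Qed.

Lemma bwd_shift (T T' : nat -> R) (A A' : nat -> set S) m s :
  (forall k, T k.+2 = T' k.+1) -> (forall k, A k.+1 = A' k) -> A 0%N = setT ->
  bwd pk T A m.+1 m.+1 s = bwd pk T' A' m m s.
Proof.
move=> HT HA HA0; elim: m s => [|m IH] s /=.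
  by rewrite HA0 int_one // prob_kernel.
rewrite HT HA; apply: eq_integral => y _; exact: IH.
Qed.

End Helpers.

Theorem proposition1 (R : realType) (d : measure_display) (S : measurableType d)
  (pk : R -> R.-pker S ~> S) (q0 pstar : probability S R)
  (L N1 : nat) (tau : nat -> R) :
  (1 <= L)%N -> (1 < N1)%N ->
  tau 1%N = 1 ->
  (forall t : nat, (1 <= t <= L)%N -> 1 <= tau t) ->
  (forall t u : nat, (1 <= t)%N -> (t <= u)%N -> (u <= L)%N -> tau t <= tau u) ->
  (forall n : nat, (n <= N1)%N -> joint_match pk q0 pstar (sched tau n) (L + n)) ->
  forall B : set S, measurable B ->
    q0 B = (\int[q0]_x pk 1%R x B)%E.
Proof.
move=> HL HN1 Ht1 Ht2 Ht3 Hm B mB.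
pose A' : nat -> set S := fun t => if t is 0%N then B else setT.
pose A : nat -> set S := fun t => if t is t'.+1 then A' t' else setT.
have mA' : forall t, measurable (A' t) by case=> [|t] /=; [exact: mB|exact: measurableT].
have mA : forall t, measurable (A t) by case=> [|t] /=; [exact: measurableT|exact: mA'].
have H0 := Hm 0%N isT A' mA'.
have H1 := Hm 1%N (ltnW HN1) A mA.
rewrite /heat_rect /cool_rect in H0 H1.
have -> : q0 B = (\int[q0]_(s in A' 0%N) fwd pk (sched tau 0) A' (L + 0) 0 s)%E.
  rewrite (eq_integral (fun _ => 1%E)); first by rewrite int_one.
  by move=> y _; apply: fwd_one => -[].
rewrite H0.
have -> : (\int[q0]_x pk 1%R x B = \int[q0]_(s in A 0%N) fwd pk (sched tau 1) A (L + 1) 0 s)%E.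
  rewrite addn1 /=; apply: eq_integral => s _.
  have -> : sched tau 1 1 = 1 by [].
  rewrite (eq_integral (fun _ => 1%E)); first by rewrite int_one.
  by move=> y _; apply: fwd_one => -[|[|]].
rewrite H1 addn0 addn1 /=.
apply: eq_integral => s _; symmetry; apply: bwd_shift => //.
Qed.
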